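(* Let $X=X_1\cdots X_n$ be uniformly distributed on $\{0,1\}^n$ (i.e. $X_i$ i.i.d. $\mathrm{Bernoulli}(1/2)$), and let $Y^1,\dots,Y^t$ be the outputs of $t$ independent deletion channels with deletion probability $\delta$ on input $X$. Let $y^1,\dots,y^t$ be observed traces with $\Pr(Y^1=y^1,\dots,Y^t=y^t)>0$, and write $I(w)=\langle y^1\uparrow\cdots\uparrow y^t,w\rangle$. Then for every $i\in\{1,\dots,n\}$, $$\Pr(X_i=1\mid Y^1=y^1,\dots,Y^t=y^t)=\frac{\displaystyle\sum_{k=0}^n 2^{n-k-1}\binom{n-1}{k}\sum_{w\in\{0,1\}^k}I(w)+\sum_{k=0}^n\sum_{j=1}^k 2^{n-k}\binom{i-1}{j-1}\binom{n-i}{k-j}\sum_{\substack{w\in\{0,1\}^k\\ w_j=1}}I(w)}{\displaystyle\sum_{k=0}^n 2^{n-k}\binom{n}{k}\sum_{w\in\{0,1\}^k}I(w)}.$$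
   Context: The deletion channel with deletion probability $\delta$ deletes each input symbol independently with probability $\delta$ and outputs the subsequence of undeleted symbols; the $t$ channels act independently given $X$. Classical binomial coefficients satisfy $\binom{a}{b}=0$ whenever $b>a$ or $b<0$. Infiltration coefficient: for binary sequences $f_1,\dots,f_t$ and $w$, $\langle f_1\uparrow\cdots\uparrow f_t,w\rangle$ is the number of tuples $(S_1,\dots,S_t)$ of subsets of $\{1,\dots,|w|\}$ such that $|S_j|=|f_j|$, the subsequence of $w$ indexed by $S_j$ equals $f_j$ for each $j$, and $S_1\cup\cdots\cup S_t=\{1,\dots,|w|\}$ (i.e. the number of ways to obtain $w$ as a supersequence of $f_1,\dots,f_t$ in which every symbol of $w$ is covered by at least one $f_j$). *)

(* Defs.v *)
From mathcomp Require Import all_boot all_order all_algebra.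
Set Implicit Arguments. Unset Strict Implicit. Unset Printing Implicit Defensive.
Import Order.TTheory GRing.Theory Num.Theory.
Local Open Scope ring_scope.

(* Probability that a deletion channel with deletion probability [d] outputs
   [y] on input [x]: sum over all keep-patterns [m] (true = kept, prob 1-d;
   false = deleted, prob d) whose kept subsequence of [x] is [y]. *)
Definition del_prob (R : pzRingType) (d : R) (x y : seq bool) : R :=
  \sum_(m : (size x).-tuple bool | mask m x == y)
     \prod_(b <- m) (if b then 1 - d else d).

Definition joint_prob (R : unitRingType) (d : R) (n t : nat)
  (ys : 'I_t -> seq bool) (x : n.-tuple bool) : R :=
  (2 ^+ n)^-1 * \prod_(j < t) del_prob d x (ys j).

Definition traces_prob (R : unitRingType) (d : R) (n t : nat)
  (ys : 'I_t -> seq bool) : R :=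
  \sum_(x : n.-tuple bool) joint_prob d ys x.

(* Pr(X_i = 1, Y^1 = y^1, ..., Y^t = y^t)  (i is 0-based here) *)
Definition bit_traces_prob (R : unitRingType) (d : R) (n t : nat)
  (ys : 'I_t -> seq bool) (i : 'I_n) : R :=
  \sum_(x : n.-tuple bool | tnth x i) joint_prob d ys x.

Definition posterior (R : unitRingType) (d : R) (n t : nat)
  (ys : 'I_t -> seq bool) (i : 'I_n) : R :=
  bit_traces_prob d ys i / traces_prob d n ys.

Definition subseq_at (k : nat) (w : k.-tuple bool) (S : {set 'I_k}) : seq bool :=
  mask [seq i \in S | i <- enum 'I_k] w.

Definition infil (t : nat) (f : 'I_t -> seq bool) (k : nat) (w : k.-tuple bool) : nat :=
  #|[set F : {ffun 'I_t -> {set 'I_k}} |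
      [forall j, (#|F j| == size (f j)) && (subseq_at w (F j) == f j)]
      && (\bigcup_(j < t) F j == [set: 'I_k])]|.

(* Main.v *)
Require Import Defs.
From mathcomp Require Import all_boot all_order all_algebra.
From mathcomp Require Import zify ring.
Import Order.TTheory GRing.Theory Num.Theory.

Module Helpers.
Set Implicit Arguments. Unset Strict Implicit. Unset Printing Implicit Defensive.

Lemma big_tuple_cons (R : Type) (idx : R) (op : Monoid.com_law idx) n
  (F : seq bool -> R) :
  \big[op/idx]_(m : n.+1.-tuple bool) F m =
  op (\big[op/idx]_(m : n.-tuple bool) F (true :: m))
     (\big[op/idx]_(m : n.-tuple bool) F (false :: m)).
Proof.
pose h (p : bool * n.-tuple bool) : n.+1.-tuple bool := cons_tuple p.1 p.2.
pose g (m : n.+1.-tuple bool) : bool * n.-tuple bool := (thead m, behead_tuple m).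
rewrite (reindex h) /=; last first.
  exists g => [[b m] _|m _]; first by congr pair; apply: val_inj.
  by rewrite /h /g; apply: val_inj => /=; case: m => [[|a s] //=].
rewrite -(pair_big xpredT xpredT (fun b (m : n.-tuple bool) => F (b :: m))) /=.
by rewrite big_bool.
Qed.

Lemma big_tuple0 (R : Type) (idx : R) (op : Monoid.com_law idx)
  (F : seq bool -> R) : \big[op/idx]_(m : 0.-tuple bool) F m = F [::].
Proof. by rewrite (big_pred1 [tuple]) // => m; rewrite [m]tuple0 /=; apply/esym/eqP. Qed.

Lemma big_tuple_cat (R : Type) (idx : R) (op : Monoid.com_law idx) a b
  (F : seq bool -> R) :
  \big[op/idx]_(m : (a + b).-tuple bool) F m =
  \big[op/idx]_(p : a.-tuple bool) \big[op/idx]_(s : b.-tuple bool) F (p ++ s).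
Proof.
elim: a F => [|a IH] F.
  by rewrite (big_tuple0 _ (fun q => \big[op/idx]_(s : b.-tuple bool) F (q ++ s))).
change (\big[op/idx]_(m : (a + b).+1.-tuple bool) F m = \big[op/idx]_(p : a.+1.-tuple bool) \big[op/idx]_(s : b.-tuple bool) F (p ++ s)).
rewrite big_tuple_cons (IH (fun q => F (true :: q))) (IH (fun q => F (false :: q))).
rewrite (@big_tuple_cons _ _ _ _ (fun q => \big[op/idx]_(s : b.-tuple bool) F (q ++ s))).
by [].
Qed.

Fixpoint emb (x w : seq bool) : nat :=
  match x with
  | [::] => (w == [::])
  | a :: x' => emb x' w + (if w is b :: w' then (a == b) * emb x' w' else 0)
  end.

Lemma emb_small x w : size x < size w -> emb x w = 0.
Proof.
elim: x w => [|a x IH] [|b w] //= h.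
rewrite IH ?(ltn_trans _ h) // IH //.
by rewrite muln0.
Qed.

Lemma emb_cat p s w :
  emb (p ++ s) w = \sum_(j < (size w).+1) emb p (take j w) * emb s (drop j w).
Proof.
elim: p w => [|a p IH] w /=.
  rewrite big_ord_recl /= take0 drop0 mul1n big1 ?addn0 // => j _.
  by case: w j => [|b w] [j hj] //=.
under eq_bigr do rewrite mulnDl.
rewrite big_split /= -IH; congr addn.
case: w => [|b w] /=.
  by rewrite big_ord_recl big_ord0.
rewrite big_ord_recl /= add0n IH big_distrr /=.
by apply: eq_bigr => j _; rewrite mulnA.
Qed.

Lemma sum_emb n w :
  \sum_(x : n.-tuple bool) emb x w = 'C(n, size w) * 2 ^ (n - size w).
Proof.
elim: n w => [|n IH] w.
  rewrite (@big_tuple0 _ _ _ (fun x => emb x w)) /=.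
  by case: w.
rewrite (@big_tuple_cons _ _ _ _ (fun x => emb x w)) /= !big_split /= !IH.
case: w => [|b w] /=.
  rewrite !big1 // !bin0 subn0 expnS; lia.
rewrite -!big_distrr /= IH binS.
case: (leqP (size w) n) => h.
  have -> : n.+1 - (size w).+1 = n - size w by lia.
  have E : 'C(n, (size w).+1) * 2 ^ (n - (size w).+1) * 2 = 'C(n, (size w).+1) * 2 ^ (n - size w).
    case: (ltnP (size w) n) => h2.
      by rewrite (_ : n - size w = (n - (size w).+1).+1) ?expnS 1?mulnCA 1?mulnC //; lia.
    by rewrite bin_small ?mul0n //; lia.
  have K : (true == b) + (false == b) = 1 by case: b.
  rewrite mulnDl -E; nia.
by rewrite !bin_small //; lia.
Qed.

Lemma pow_fact a b c e :
  'C(a, b) * 2 ^ (a - b) * ('C(c, e) * 2 ^ (c - e)) =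
  2 ^ (a + c - (b + e)) * ('C(a, b) * 'C(c, e)).
Proof.
case: (leqP b a) => h1; last by rewrite bin_small // !mul0n muln0.
case: (leqP e c) => h2; last by rewrite (bin_small h2) !mul0n !muln0.
rewrite (_ : a + c - (b + e) = (a - b) + (c - e)); last by lia.
rewrite expnD; nia.
Qed.

Lemma sum_emb_bit i m w :
  \sum_(x : (i + m.+1).-tuple bool | nth false x i) emb x w =
  2 ^ (i + m - size w) * 'C(i + m, size w) +
  \sum_(j < size w) nth false w j * (2 ^ (i + m.+1 - size w) * 'C(i, j) * 'C(m, size w - j.+1)).
Proof.
rewrite big_mkcond /=.
rewrite (@big_tuple_cat _ _ _ _ _ (fun x => if nth false x i then emb x w else 0)).
have E1 : forall p : i.-tuple bool,
   \sum_(s : m.+1.-tuple bool) (if nth false (p ++ s) i then emb (p ++ s) w else 0)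
   = \sum_(s : m.-tuple bool) emb (p ++ true :: s) w.
  move=> p.
  rewrite (@big_tuple_cons _ _ _ _ (fun s => if nth false (p ++ s) i then emb (p ++ s) w else 0)).
  rewrite /= [X in _ + X]big1 ?addn0; last first.
    by move=> s _; rewrite nth_cat size_tuple ltnn subnn.
  by apply: eq_bigr => s _; rewrite nth_cat size_tuple ltnn subnn.
rewrite (eq_bigr _ (fun p _ => E1 p)) {E1}.
under eq_bigr do under eq_bigr do rewrite emb_cat.
under eq_bigr do rewrite exchange_big /=.
rewrite exchange_big /=.
under eq_bigr do under eq_bigr do rewrite -big_distrr /=.
under eq_bigr do rewrite -big_distrl /=.
set k := size w.
have E2 : forall j : 'I_k.+1,
  (\sum_(p : i.-tuple bool) emb p (take j w)) *
  \sum_(s : m.-tuple bool) (emb s (drop j w) +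
         match drop j w with
         | [::] => 0
         | b :: w' => (true == b) * emb s w'
         end) =
  'C(i, j) * 2 ^ (i - j) * ('C(m, k - j) * 2 ^ (m - (k - j))) +
  (if j < k then nth false w j * ('C(i, j) * 2 ^ (i - j) *
      ('C(m, k - j.+1) * 2 ^ (m - (k - j.+1)))) else 0).
  move=> [j hj] /=.
  have hj' : j <= k by [].
  rewrite sum_emb size_takel // big_split /= sum_emb size_drop -/k.
  case: (ltnP j k) => h.
    rewrite (drop_nth false h) /= -big_distrr /= sum_emb size_drop -/k.
    set A := 'C(i, j) * 2 ^ (i - j).
    rewrite mulnDr; congr addn.
    by case: (nth false w j); rewrite /= ?mul1n ?mul0n ?muln0.
  by rewrite drop_oversize ?big1 ?addn0 //; lia.
rewrite (eq_bigr _ (fun j _ => E2 j)) big_split /=.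
congr addn.
  rewrite (eq_bigr (fun j : 'I_k.+1 => 2 ^ (i + m - k) * ('C(i, j) * 'C(m, k - j)))).
    by rewrite -big_distrr /= binomial.Vandermonde mulnC.
  move=> [j hj] _ /=; rewrite pow_fact.
  by rewrite (_ : j + (k - j) = k) //; lia.
rewrite big_ord_recr /= ltnn addn0.
apply: eq_bigr => [[j hj]] _ /=.
rewrite hj pow_fact (_ : i + m - (j + (k - j.+1)) = i + m.+1 - k); last by lia.
congr muln; nia.
Qed.

Definition infs t (ys : 'I_t -> seq bool) (w : seq bool) : nat := infil ys (in_tuple w).



Lemma infil_eq t (ys : 'I_t -> seq bool) k1 k2 (w1 : k1.-tuple bool) (w2 : k2.-tuple bool) :
  val w1 = val w2 -> infil ys w1 = infil ys w2.
Proof.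
move=> e.
have ek : k1 = k2 by rewrite -(size_tuple w1) -(size_tuple w2) e.
subst k2.
by rewrite (val_inj e).
Qed.

Lemma infil_val t (ys : 'I_t -> seq bool) k (w : k.-tuple bool) : infil ys w = infs ys w.
Proof. by apply: infil_eq. Qed.

Lemma size_subseq_at k (w : k.-tuple bool) S : size (subseq_at w S) = #|S|.
Proof.
rewrite /subseq_at size_mask; last by rewrite size_map size_enum_ord size_tuple.
rewrite count_map cardE /enum_mem size_filter ?count_filter -?enumT; apply: eq_count => x; rewrite /= ?inE ?andbT. by []. Qed.

Lemma subseq_at_cons k c (w : k.-tuple bool) (S : {set 'I_k.+1}) :
  subseq_at (cons_tuple c w) S =
  if ord0 \in S then c :: subseq_at w [set x | lift ord0 x \in S]
  else subseq_at w [set x | lift ord0 x \in S].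
Proof.
rewrite /subseq_at enum_ordSl /= -map_comp.
have -> : [seq i \in [set x | lift ord0 x \in S] | i <- enum 'I_k] =
          [seq ((fun i => i \in S) \o lift ord0) i | i <- enum 'I_k].
  by apply: eq_map => x; rewrite inE.
by case: (ord0 \in S).
Qed.

Definition goodF t (ys : 'I_t -> seq bool) k (w : k.-tuple bool)
  (F : {ffun 'I_t -> {set 'I_k}}) : bool :=
  [forall j, subseq_at w (F j) == ys j] && (\bigcup_(j < t) F j == [set: 'I_k]).

Lemma infil_sum t (ys : 'I_t -> seq bool) k (w : k.-tuple bool) :
  infil ys w = \sum_F goodF ys w F.
Proof.
rewrite /infil -sum1_card big_mkcond /=; apply: eq_bigr => F _; rewrite inE /goodF.
congr (nat_of_bool (_ && _)).
apply: eq_forallb => j.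
by case: (subseq_at w (F j) =P ys j) => e; rewrite ?andbF // -e size_subseq_at eqxx.
Qed.

Lemma in_bigcup t k (F : 'I_t -> {set 'I_k}) x :
  (x \in \bigcup_(j < t) F j) = [exists j, x \in F j].
Proof. by apply/bigcupP/existsP => [[j _ h]|[j h]]; exists j. Qed.

Lemma setT_eq k (A : {set 'I_k}) : (A == setT) = [forall x, x \in A].
Proof.
apply/eqP/forallP => [-> x|h]; first by rewrite inE.
by apply/setP => x; rewrite inE h.
Qed.

Lemma forall_ordS k (P : pred 'I_k.+1) :
  [forall x, P x] = P ord0 && [forall y, P (lift ord0 y)].
Proof.
apply/forallP/andP => [h|[h0 /forallP h]]; first by split => //; apply/forallP.
by move=> x; case: (unliftP ord0 x) => [y ->|->].
Qed.

Lemma forall_andb (T : finType) (P Q : pred T) :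
  [forall x, P x && Q x] = [forall x, P x] && [forall x, Q x].
Proof.
apply/forallP/andP => [h|[/forallP h1 /forallP h2] x].
  by split; apply/forallP => x; case/andP: (h x).
by rewrite h1 h2.
Qed.

Definition psi t k (p : {ffun 'I_t -> bool} * {ffun 'I_t -> {set 'I_k}}) :
  {ffun 'I_t -> {set 'I_k.+1}} :=
  [ffun j => (if p.1 j then [set ord0] else set0) :|: [set lift ord0 x | x in p.2 j]].

Definition phi t k (F : {ffun 'I_t -> {set 'I_k.+1}}) :
  {ffun 'I_t -> bool} * {ffun 'I_t -> {set 'I_k}} :=
  ([ffun j => ord0 \in F j], [ffun j => [set x | lift ord0 x \in F j]]).

Lemma psi0 t k p j : (ord0 \in @psi t k p j) = p.1 j.
Proof.
rewrite ffunE in_setU.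
have -> : (ord0 \in [set lift ord0 x | x in p.2 j]) = false.
  by apply/imsetP => [[x _ e]]; move: (neq_lift ord0 x); rewrite -e eqxx.
by case: (p.1 j); rewrite ?inE ?eqxx.
Qed.

Lemma psiS t k p j x : (lift ord0 x \in @psi t k p j) = (x \in p.2 j).
Proof.
rewrite ffunE in_setU mem_imset; last exact: lift_inj.
case: (p.1 j); rewrite ?inE //.
Qed.

Lemma psi_bij t k : bijective (@psi t k).
Proof.
exists (@phi t k).
  move=> [f G]; rewrite /phi; congr pair; apply/ffunP => j; rewrite [LHS]ffunE.
    by rewrite psi0.
  by apply/setP => x; rewrite inE psiS.
move=> F; apply/ffunP => j; apply/setP => x.
case: (unliftP ord0 x) => [y ->|->].
  by rewrite psiS /phi /= ffunE inE.
by rewrite psi0 /phi /= ffunE.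
Qed.

Lemma good_psi t (ys : 'I_t -> seq bool) k c (w : k.-tuple bool) f G :
  goodF ys (cons_tuple c w) (psi (f, G)) =
  ([exists j, f j] && [forall j, f j ==> (ys j == c :: behead (ys j))]) &&
  goodF (fun j => if f j then behead (ys j) else ys j) w G.
Proof.
rewrite /goodF.
have A : [forall j, subseq_at (cons_tuple c w) (psi (f, G) j) == ys j] =
   [forall j, f j ==> (ys j == c :: behead (ys j))] &&
   [forall j, subseq_at w (G j) == (if f j then behead (ys j) else ys j)].
  rewrite -forall_andb; apply: eq_forallb => j.
  rewrite subseq_at_cons psi0 /=.
  have -> : [set x | lift ord0 x \in psi (f, G) j] = G j.
    by apply/setP => x; rewrite inE psiS.
  case: (f j) => /=; last by [].
  case: (ys j) => [|b y] //=.
  by rewrite !eqseq_cons eqxx andbT eq_sym.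
have B : (\bigcup_(j < t) psi (f, G) j == [set: 'I_k.+1]) =
   [exists j, f j] && (\bigcup_(j < t) G j == [set: 'I_k]).
  rewrite !setT_eq forall_ordS in_bigcup.
  congr andb.
    by apply: eq_existsb => j; rewrite psi0.
  apply: eq_forallb => y; rewrite !in_bigcup.
  by apply: eq_existsb => j; rewrite psiS.
rewrite A B.
by case: [forall j, _]; case: [exists j, _]; case: [forall j, _]; case: (_ == _).
Qed.

Lemma infil_cons t (ys : 'I_t -> seq bool) k c (w : k.-tuple bool) :
  infil ys (cons_tuple c w) =
  \sum_(f : {ffun 'I_t -> bool} |
          [exists j, f j] && [forall j, f j ==> (ys j == c :: behead (ys j))])
     infil (fun j => if f j then behead (ys j) else ys j) w.
Proof.
rewrite infil_sum (reindex (@psi t k)) /=; last exact: onW_bij (psi_bij t k).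
have -> : \sum_p goodF ys (cons_tuple c w) (psi p) =
   \sum_(f : {ffun 'I_t -> bool}) \sum_(G : {ffun 'I_t -> {set 'I_k}}) goodF ys (cons_tuple c w) (psi (f, G)).
  by rewrite pair_bigA; apply: eq_bigr => [[f G]].
rewrite [RHS]big_mkcond /=; apply: eq_bigr => f _.
under eq_bigr do rewrite good_psi.
case: (_ && _) => /=; last by rewrite big1.
by rewrite infil_sum.
Qed.

Lemma infil_nil t (ys : 'I_t -> seq bool) (w : 0.-tuple bool) :
  infil ys w = [forall j, ys j == [::]].
Proof.
rewrite infil_sum (big_pred1 [ffun=> set0]); last first.
  move=> F; apply/esym/eqP/ffunP => j; rewrite ffunE; apply/setP => [[x hx]] //.
rewrite /goodF.
have -> : (\bigcup_(j < t) [ffun=> set0] j == [set: 'I_0]).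
  by apply/eqP/setP => [[x hx]].
rewrite andbT; congr nat_of_bool; apply: eq_forallb => j.
rewrite ffunE /subseq_at [w]tuple0 /= eq_sym.
by case: (enum 'I_0) => [|a s].
Qed.

Lemma prod_nat_bool t (b : 'I_t -> bool) : \prod_(j < t) (b j : nat) = [forall j, b j].
Proof.
case: forallP => h; first by rewrite big1 // => j _; rewrite h.
have [j hj] : exists j, ~~ b j.
  by apply/existsP; rewrite -negb_forall; apply/forallP.
by rewrite (bigD1 j) //= (negbTE hj).
Qed.

Lemma ffun_false t (f : {ffun 'I_t -> bool}) :
  (f != [ffun=> false]) = [exists j, f j].
Proof.
have -> : (f == [ffun=> false]) = [forall j, ~~ f j].
  apply/eqP/forallP => [-> j|h]; first by rewrite ffunE.
  by apply/ffunP => j; rewrite ffunE; apply/negbTE.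
rewrite negb_forall; apply: eq_existsb => j; exact: negbK.
Qed.

Lemma prod_emb x : forall t (ys : 'I_t -> seq bool),
  \prod_(j < t) emb x (ys j) =
  \sum_(k < (size x).+1) \sum_(w : k.-tuple bool) infs ys w * emb x w.
Proof.
elim: x => [|a x IH] t ys.
  rewrite big_ord1 (@big_tuple0 _ _ _ (fun w => infs ys w * emb [::] w)) /=.
  rewrite muln1 /infs infil_nil -prod_nat_bool.
  by apply: eq_bigr.
pose A j := emb x (ys j).
pose B j := (ys j == a :: behead (ys j)) * emb x (behead (ys j)).
have EB : forall j, emb (a :: x) (ys j) = \sum_(b : bool) (if b then B j else A j).
  move=> j; rewrite big_bool /= /A /B addnC; congr addn.
  case: (ys j) => [|b y] //=.
  by rewrite eqseq_cons eqxx andbT eq_sym.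
rewrite (eq_bigr _ (fun j _ => EB j)) bigA_distr_bigA /=.
have EP : forall f : {ffun 'I_t -> bool},
    \prod_j (if f j then B j else A j) =
    [forall j, f j ==> (ys j == a :: behead (ys j))] *
    \prod_(j < t) emb x (if f j then behead (ys j) else ys j).
  move=> f; rewrite -prod_nat_bool -big_split; apply: eq_bigr => j _.
  by rewrite /A /B; case: (f j) => /=; rewrite ?mul1n.
rewrite (eq_bigr _ (fun f _ => EP f)).
rewrite (bigD1 [ffun=> false]) //=.
have E0 : [forall j, [ffun=> false] j ==> (ys j == a :: behead (ys j))] *
    \prod_(j < t) emb x (if [ffun=> false] j then behead (ys j) else ys j)
    = \prod_(j < t) emb x (ys j).
  rewrite (_ : [forall j, _] = true); last by apply/forallP => j; rewrite ffunE.
  by rewrite mul1n; apply: eq_bigr => j _; rewrite ffunE.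
rewrite E0 IH.
under eq_bigr => f _ do rewrite (IH t (fun j => if f j then behead (ys j) else ys j)).
under [RHS]eq_bigr do under eq_bigr do rewrite mulnDr.
under [RHS]eq_bigr do rewrite big_split /=.
rewrite [RHS]big_split /=; congr addn.
  rewrite [RHS]big_ord_recr /= [X in _ = _ + X]big1 ?addn0 //.
  by move=> w _; rewrite emb_small ?muln0 // size_tuple.
have E3 : forall k, \sum_(w : k.+1.-tuple bool) infs ys w *
     match tval w with [::] => 0 | b :: w' => (a == b) * emb x w' end =
   \sum_(f | f != [ffun=> false]) [forall j, f j ==> (ys j == a :: behead (ys j))] *
     \sum_(w : k.-tuple bool) infs (fun j => if f j then behead (ys j) else ys j) w * emb x w.
  move=> k.
  rewrite (@big_tuple_cons _ _ _ _ (fun w => infs ys w *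
     match w with [::] => 0 | b :: w' => (a == b) * emb x w' end)) /=.
  have E4 : \sum_(m : k.-tuple bool) infs ys (true :: m) * ((a == true) * emb x m) +
            \sum_(m : k.-tuple bool) infs ys (false :: m) * ((a == false) * emb x m) =
            \sum_(m : k.-tuple bool) infs ys (a :: m) * emb x m.
    rewrite -big_split; apply: eq_bigr => m _ /=.
    by case: (a) => /=; rewrite ?mul1n ?mul0n ?muln0 ?addn0.
  rewrite E4.
  have E5 : forall m : k.-tuple bool, infs ys (a :: m) = infil ys (cons_tuple a m).
    by move=> m; rewrite infil_val.
  under [LHS]eq_bigr => m _ do rewrite E5 infil_cons big_distrl /=.
  rewrite exchange_big /= [LHS]big_mkcond [RHS]big_mkcond /=.
  apply: eq_bigr => f _; rewrite ffun_false.
  case: [exists j, f j] => //=.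
  case: [forall j, _] => /=; last by rewrite mul0n.
  by rewrite mul1n; apply: eq_bigr => m _; rewrite infil_val.
rewrite [RHS]big_ord_recl /=.
rewrite (@big_tuple0 _ _ _ (fun w => infs ys w *
     match w with [::] => 0 | b :: w' => (a == b) * emb x w' end)) /= muln0 add0n.
rewrite (eq_bigr (fun k : 'I_(size x).+1 => \sum_(f | f != [ffun=> false]) [forall j, f j ==> (ys j == a :: behead (ys j))] *
     \sum_(w : k.-tuple bool) infs (fun j => if f j then behead (ys j) else ys j) w * emb x w)); last first.
  move=> k _; exact: (E3 k).
rewrite exchange_big /=; apply: eq_bigr => f _.
by rewrite big_distrr.
Qed.

Lemma sum_emb_bit' n i w : i < n ->
  \sum_(x : n.-tuple bool | nth false x i) emb x w =
  2 ^ (n.-1 - size w) * 'C(n.-1, size w) +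
  \sum_(j < size w) nth false w j * (2 ^ (n - size w) * 'C(i, j) * 'C(n - i.+1, size w - j.+1)).
Proof.
move=> hi; move Em: (n - i.+1) => m.
have e : n = i + m.+1 by lia.
subst n.
rewrite sum_emb_bit addnS /=.
by [].
Qed.

Lemma den_nat n t (ys : 'I_t -> seq bool) :
  \sum_(x : n.-tuple bool) \prod_(j < t) emb x (ys j) =
  \sum_(k < n.+1) 2 ^ (n - k) * 'C(n, k) * \sum_(w : k.-tuple bool) infil ys w.
Proof.
under eq_bigr => x _ do rewrite prod_emb size_tuple.
rewrite exchange_big /=; apply: eq_bigr => k _.
rewrite exchange_big /= big_distrr /=; apply: eq_bigr => w _.
rewrite -big_distrr /= sum_emb size_tuple infil_val; lia.
Qed.

Lemma num_nat n t (ys : 'I_t -> seq bool) i : i < n ->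
  \sum_(x : n.-tuple bool | nth false x i) \prod_(j < t) emb x (ys j) =
  \sum_(k < n.+1) 2 ^ (n.-1 - k) * 'C(n.-1, k) * \sum_(w : k.-tuple bool) infil ys w +
  \sum_(k < n.+1) \sum_(j < k) 2 ^ (n - k) * 'C(i, j) * 'C(n - i.+1, k - j.+1) *
      \sum_(w : k.-tuple bool | nth false w j) infil ys w.
Proof.
move=> hi.
under eq_bigr => x _ do rewrite prod_emb size_tuple.
rewrite exchange_big /= -big_split /=; apply: eq_bigr => k _.
rewrite exchange_big /=.
under eq_bigr => w _ do rewrite -big_distrr /= sum_emb_bit' // size_tuple mulnDr big_distrr /=.
rewrite big_split /=; congr addn.
  rewrite big_distrr; apply: eq_bigr => w _; rewrite infil_val; by rewrite /= mulnC.
rewrite exchange_big; apply: eq_bigr => j _; rewrite big_distrr /= [RHS]big_mkcond /=.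
apply: eq_bigr => w _; rewrite infil_val; case: (nth false w j) => /=; lia.
Qed.

Local Open Scope ring_scope.

Lemma del_prob_emb (R : realFieldType) (d : R) x y :
  del_prob d x y = (emb x y)%:R * ((1 - d) ^+ size y * d ^+ (size x - size y)).
Proof.
elim: x y => [|a x IH] y.
  rewrite /del_prob big_mkcond /=.
  rewrite (@big_tuple0 _ _ _ (fun m => if mask m [::] == y then
            \prod_(b <- m) (if b then 1 - d else d) else 0)) /= big_nil.
  by case: y => [|b y] /=; rewrite ?mul1r ?mul0r.
rewrite /del_prob big_mkcond /=.
rewrite (@big_tuple_cons _ _ _ _ (fun m => if mask m (a :: x) == y then
            \prod_(b <- m) (if b then 1 - d else d) else 0)) /=.
have E2 : \sum_(m : (size x).-tuple bool)
     (if mask m x == y then \prod_(b <- false :: m) (if b then 1 - d else d) else 0)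
     = d * del_prob d x y.
  rewrite /del_prob [X in _ = _ * X]big_mkcond mulr_sumr; apply: eq_bigr => m _.
  by rewrite big_cons; case: (_ == _); rewrite ?mulr0.
rewrite E2 IH {E2}.
case: y => [|b y] /=.
  rewrite big1 ?add0r; last by [].
  by rewrite !addn0 !subn0 !expr0 !mul1r exprS mulrCA.
have E1 : \sum_(m : (size x).-tuple bool)
     (if a :: mask m x == b :: y then \prod_(b <- true :: m) (if b then 1 - d else d) else 0)
     = (a == b)%:R * (1 - d) * del_prob d x y.
  rewrite /del_prob [X in _ = _ * X]big_mkcond mulr_sumr; apply: eq_bigr => m _.
  rewrite eqseq_cons big_cons; case: (a == b); rewrite /= ?mul0r ?mul1r //.
  by case: (_ == _); rewrite ?mulr0.
rewrite E1 IH natrD natrM subSS.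
case: (ltnP (size y) (size x)) => h.
  rewrite (_ : (size x - size y = (size x - (size y).+1).+1)%N); last by lia.
  rewrite !exprS.
  set u := (a == b)%:R; set v := (emb x y)%:R; set v' := (emb x (b :: y))%:R.
  set p := (1 - d) ^+ size y; set q := d ^+ (size x - (size y).+1).
  ring.
rewrite (emb_small (x := x) (w := b :: y)) /=; last by lia.
rewrite mul0r mulr0 addr0 add0r exprS.
set u := (a == b)%:R; set v := (emb x y)%:R.
set p := (1 - d) ^+ size y; set q := d ^+ (size x - size y).
ring.
Qed.

End Helpers.
Import Helpers.

Local Open Scope ring_scope.
Theorem theorem7 (R : realFieldType) (d : R) (hd0 : 0 <= d) (hd1 : d <= 1)
  (n t : nat) (ys : 'I_t -> seq bool)
  (hpos : 0 < traces_prob d n ys) (i : 'I_n) :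
  posterior d ys i =
    ( \sum_(0 <= k < n.+1)
        (2 ^+ (n - k) / 2) * ('C(n.-1, k))%:R *
        (\sum_(w : k.-tuple bool) (infil ys w)%:R)
    + \sum_(0 <= k < n.+1) \sum_(1 <= j < k.+1)
        2 ^+ (n - k) * ('C(val i, j.-1))%:R * ('C(n - (val i).+1, k - j))%:R *
        (\sum_(w : k.-tuple bool | nth false w j.-1) (infil ys w)%:R) )
    / ( \sum_(0 <= k < n.+1)
        2 ^+ (n - k) * ('C(n, k))%:R *
        (\sum_(w : k.-tuple bool) (infil ys w)%:R) ).
Proof.
pose c : R := (2 ^+ n)^-1 * \prod_(j < t) ((1 - d) ^+ size (ys j) * d ^+ (n - size (ys j))).
have JE : forall x : n.-tuple bool,
    joint_prob d ys x = c * (\prod_(j < t) emb x (ys j))%:R.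
  move=> x; rewrite /joint_prob natr_prod.
  under [X in _ * X = _]eq_bigr do rewrite del_prob_emb size_tuple.
  by rewrite big_split /= /c -mulrA [X in _ * X = _]mulrC.
have TE : traces_prob d n ys = c * (\sum_(x : n.-tuple bool) \prod_(j < t) emb x (ys j))%N%:R.
  by rewrite /traces_prob natr_sum mulr_sumr; apply: eq_bigr => x _; rewrite JE.
have BE : bit_traces_prob d ys i =
    c * (\sum_(x : n.-tuple bool | nth false x i) \prod_(j < t) emb x (ys j))%N%:R.
  rewrite /bit_traces_prob natr_sum mulr_sumr.
  apply: eq_big => x; first by rewrite (tnth_nth false).
  by move=> _; rewrite JE.
have c0 : c != 0.
  apply/eqP => c0; move: hpos; rewrite TE c0 mul0r ltxx //.
rewrite /posterior BE TE -mulf_div divff // mul1r.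
rewrite num_nat // den_nat.
congr (_ / _); last first.
  rewrite natr_sum big_mkord; apply: eq_bigr => k _.
  by rewrite !natrM natrX natr_sum.
rewrite natrD; congr (_ + _).
  rewrite natr_sum big_mkord; apply: eq_bigr => [[k hk]] _ /=.
  rewrite !natrM natrX natr_sum; congr (_ * _).
  case: (ltnP k n) => h.
    rewrite (_ : (n - k = (n.-1 - k).+1)%N); last by lia.
    by rewrite exprS [2 * _]mulrC mulfK // pnatr_eq0.
  have hi := ltn_ord i; rewrite bin_small ?mulr0 // -subn1; lia.
rewrite natr_sum big_mkord; apply: eq_bigr => [[k hk]] _ /=.
rewrite natr_sum big_add1 /= big_mkord; apply: eq_bigr => j _.
by rewrite !natrM !natrX natr_sum.
Qed.
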